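(* Fix $\kappa>0$ and $x_0\in\mathbb R^2$ with $\kappa|x_0|$ irrational. Let $m,\Phi,I,l,\alpha_0$ satisfy hypotheses (1)–(3) of Lemma (int1 est), and set $u(\alpha):=\Phi_l(\alpha)-\Phi_l(\alpha_0)$ (which does not change sign on $I$). Then the function $$f(\alpha):=\frac{d}{d\alpha}\Bigl[\frac{|u(\alpha)|^{1/2}}{\sin(\pi\kappa\Phi_l'(\alpha))}\Bigr],$$ defined on $I$ away from the zero set of $\Phi_l'$, changes sign at most $N$ times on $I$, where $N$ is independent of $m\neq0$ (and of $l$ and $I$).
   Context: $\vec\alpha=(\cos\alpha,\sin\alpha)$. $\Phi(\alpha):=-m\,\vec\alpha\cdot x_0$ with $m\in\mathbb Z\setminus\{0\}$; $\Phi_l(\alpha):=\Phi(\alpha)-(l/\kappa)\alpha$. Hypotheses of Lemma (int1 est): $I=[a,b]\subset[-\pi,\pi]$, $l\in\mathbb Z$; (1) $\Phi''(\alpha)\neq0$ on $(a,b)$; (2) $\alpha_0\in I$ with $\kappa\Phi'(\alpha_0)=l$ and $\Phi''(\alpha_0)\ne0$; (3) $|\kappa\Phi'(\alpha)-l|\le1/2$ on $I$. *)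

(* Defs.v *)
From Stdlib Require Import Reals ZArith.
From Coquelicot Require Import Coquelicot.
Open Scope R_scope.

(* x0 in R^2 as a pair; vec(alpha) . x0 = cos alpha * x0_1 + sin alpha * x0_2 *)
Definition Phi (m : Z) (x0 : R * R) (alpha : R) : R :=
  - IZR m * (cos alpha * fst x0 + sin alpha * snd x0).

Definition Phil (kappa : R) (m l : Z) (x0 : R * R) (alpha : R) : R :=
  Phi m x0 alpha - (IZR l / kappa) * alpha.

Definition norm2 (x0 : R * R) : R := sqrt (fst x0 ^ 2 + snd x0 ^ 2).

Definition irrational (x : R) : Prop :=
  ~ exists p q : Z, q <> 0%Z /\ x = IZR p / IZR q.

Definition u_fun (kappa : R) (m l : Z) (x0 : R * R) (alpha0 alpha : R) : R :=
  Phil kappa m l x0 alpha - Phil kappa m l x0 alpha0.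

Definition f_fun (kappa : R) (m l : Z) (x0 : R * R) (alpha0 : R) (alpha : R) : R :=
  Derive (fun beta => sqrt (Rabs (u_fun kappa m l x0 alpha0 beta))
                      / sin (PI * kappa * Derive (Phil kappa m l x0) beta)) alpha.

Definition sign_changes_at_most (D : R -> Prop) (g : R -> R) (N : nat) : Prop :=
  ~ exists t : nat -> R,
      (forall i, (i <= S N)%nat -> D (t i)) /\
      (forall i, (i <= N)%nat -> t i < t (S i) /\ g (t i) * g (t (S i)) < 0).

(* Main.v *)
Require Import Defs.
From Stdlib Require Import Reals ZArith Lra Lia Psatz Nsatz ClassicalEpsilon.
From Coquelicot Require Import Coquelicot.
Open Scope R_scope.

Lemma sc_mono_N D g N N' : (N <= N')%nat -> sign_changes_at_most D g N -> sign_changes_at_most D g N'.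
Proof.
  intros HN H [t [H1 H2]]. apply H. exists t. split.
  - intros i Hi. apply H1. lia.
  - intros i Hi. apply H2. lia.
Qed.

Lemma sc_sub D D' g N : (forall x, D' x -> D x) -> sign_changes_at_most D g N -> sign_changes_at_most D' g N.
Proof.
  intros HD H [t [H1 H2]]. apply H. exists t. split; auto.
Qed.

Lemma sc_sign D g k N :
  (forall x y, D x -> D y -> g x * g y < 0 -> k x * k y < 0) ->
  sign_changes_at_most D k N -> sign_changes_at_most D g N.
Proof.
  intros Hs H [t [H1 H2]]. apply H. exists t. split; auto.
  intros i Hi. destruct (H2 i Hi) as [H3 H4]. split; auto.
  apply Hs; auto; apply H1; lia.
Qed.

Lemma sc_factor D g c k N :
  (forall x, D x -> g x = c x * k x) ->
  (forall x y, D x -> D y -> 0 < c x * c y) ->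
  sign_changes_at_most D k N -> sign_changes_at_most D g N.
Proof.
  intros Hg Hc. apply sc_sign. intros x y Dx Dy H.
  rewrite (Hg x Dx), (Hg y Dy) in H. specialize (Hc x y Dx Dy).
  replace (c x * k x * (c y * k y)) with ((c x * c y) * (k x * k y)) in H by ring.
  destruct (Rlt_le_dec (k x * k y) 0) as [h|h]; auto.
  exfalso. assert (0 <= c x * c y * (k x * k y)) by (apply Rmult_le_pos; lra). lra.
Qed.

Lemma sc_monotone D g :
  (forall x y, D x -> D y -> x <= y -> g x <= g y) -> sign_changes_at_most D g 1.
Proof.
  intros Hm [t [H1 H2]].
  destruct (H2 0%nat ltac:(lia)) as [a1 b1]. destruct (H2 1%nat ltac:(lia)) as [a2 b2].
  assert (D0: D (t 0%nat)) by (apply H1; lia).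
  assert (D1: D (t 1%nat)) by (apply H1; lia).
  assert (D2: D (t 2%nat)) by (apply H1; lia).
  pose proof (Hm _ _ D0 D1 ltac:(lra)). pose proof (Hm _ _ D1 D2 ltac:(lra)).
  set (u0 := g (t 0%nat)) in *. set (u1 := g (t 1%nat)) in *. set (u2 := g (t 2%nat)) in *.
  destruct (Rlt_le_dec u1 0).
  - assert (u0 < 0) by lra. nra.
  - destruct (Req_dec u1 0) as [e|ne]. rewrite e in b1; lra.
    assert (0 < u2) by lra. nra.
Qed.

Lemma sc_point a g : sign_changes_at_most (fun x => x = a) g 0.
Proof.
  intros [t [H1 H2]]. destruct (H2 0%nat ltac:(lia)) as [h _].
  rewrite (H1 0%nat ltac:(lia)), (H1 1%nat ltac:(lia)) in h. lra.
Qed.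

Lemma sc_union D1 D2 g N1 N2 :
  (forall x y, D1 x -> D2 y -> x < y) ->
  sign_changes_at_most D1 g N1 -> sign_changes_at_most D2 g N2 ->
  sign_changes_at_most (fun x => D1 x \/ D2 x) g (N1 + N2 + 1).
Proof.
  intros Hxy H1 H2 [t [Ht1 Ht2]].
  assert (Hinc : forall i j, (i < j)%nat -> (j <= S (N1 + N2 + 1))%nat -> t i < t j).
  { intros i j Hij. induction Hij as [|j Hij IH]; intros Hj.
    - apply Ht2; lia.
    - apply Rlt_trans with (t j). apply IH; lia. apply Ht2; lia. }
  destruct (Ht1 (S N1) ltac:(lia)) as [HD|HD].
  - apply H1. exists t. split.
    + intros i Hi. destruct (Nat.lt_ge_cases i (S N1)) as [Hlt|Heq].
      * destruct (Ht1 i ltac:(lia)) as [h|h]; auto.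
        exfalso. pose proof (Hxy _ _ HD h). pose proof (Hinc i (S N1) Hlt ltac:(lia)). lra.
      * replace i with (S N1) by lia; auto.
    + intros i Hi. apply Ht2. lia.
  - apply H2. exists (fun i => t (S N1 + i)%nat). split.
    + intros i Hi. destruct i as [|i].
      * rewrite Nat.add_0_r; auto.
      * destruct (Ht1 (S N1 + S i)%nat ltac:(lia)) as [h|h]; auto.
        exfalso. pose proof (Hxy _ _ h HD). pose proof (Hinc (S N1) (S N1 + S i)%nat ltac:(lia) ltac:(lia)). lra.
    + intros i Hi. replace (S N1 + S i)%nat with (S (S N1 + i)) by lia. apply Ht2. lia.
Qed.

Lemma slope_alt g0 g1 g2 : g0 * g1 <= 0 -> g1 * g2 <= 0 -> g1 <> 0 -> (g1 - g0) * (g2 - g1) < 0.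
Proof.
  intros H1 H2 H3. destruct (Rlt_le_dec 0 g1).
  - assert (g0 <= 0) by nra. assert (g2 <= 0) by nra. nra.
  - assert (g1 < 0) by lra. assert (0 <= g0) by nra. assert (0 <= g2) by nra. nra.
Qed.

Lemma mvt_seq g dg (T : nat -> R) n :
  (forall i x, (i <= n)%nat -> T i <= x <= T (S i) -> is_derive g x (dg x)) ->
  (forall i, (i <= n)%nat -> T i < T (S i)) ->
  (forall i, (i <= n)%nat -> g (T i) * g (T (S i)) <= 0) ->
  (forall i, (1 <= i <= n)%nat -> g (T i) <> 0) ->
  exists c : nat -> R, (forall i, (i <= n)%nat -> T i < c i < T (S i)) /\
     (forall i, (i < n)%nat -> dg (c i) * dg (c (S i)) < 0).
Proof.
  intros Hd Hinc Hp Hnz.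
  assert (H : forall i, exists c, (i <= n)%nat ->
     T i < c < T (S i) /\ g (T (S i)) - g (T i) = dg c * (T (S i) - T i)).
  { intros i. destruct (le_lt_dec i n) as [hi|hi].
    - destruct (MVT_cor2 g dg (T i) (T (S i)) (Hinc i hi)) as [c [Hc1 Hc2]].
      + intros x Hx. apply is_derive_Reals. apply (Hd i); auto.
      + exists c. intros _. split; auto.
    - exists 0. intros; lia. }
  exists (fun i => proj1_sig (constructive_indefinite_description _ (H i))).
  split.
  - intros i Hi. destruct (constructive_indefinite_description _ (H i)) as [c Hc]. simpl.
    apply Hc; auto.
  - intros i Hi.
    destruct (constructive_indefinite_description _ (H i)) as [c Hc]. simpl.
    destruct (constructive_indefinite_description _ (H (S i))) as [c' Hc']. simpl.
    destruct (Hc ltac:(lia)) as [[h1 h2] e1]. destruct (Hc' ltac:(lia)) as [[h3 h4] e2].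
    pose proof (slope_alt (g (T i)) (g (T (S i))) (g (T (S (S i))))
                 (Hp i ltac:(lia)) (Hp (S i) ltac:(lia)) (Hnz (S i) ltac:(lia))) as Hs.
    rewrite e1, e2 in Hs.
    assert (p1 : 0 < T (S i) - T i) by lra. assert (p2 : 0 < T (S (S i)) - T (S i)) by lra.
    replace (dg c * (T (S i) - T i) * (dg c' * (T (S (S i)) - T (S i))))
      with ((dg c * dg c') * ((T (S i) - T i) * (T (S (S i)) - T (S i)))) in Hs by ring.
    destruct (Rlt_le_dec (dg c * dg c') 0) as [h|h]; auto.
    assert (0 <= dg c * dg c' * ((T (S i) - T i) * (T (S (S i)) - T (S i)))).
    { apply Rmult_le_pos; auto. apply Rmult_le_pos; lra. } lra.
Qed.

Lemma sc_deriv D g dg k :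
  (forall x y z, D x -> D y -> x <= z <= y -> D z) ->
  (forall x, D x -> is_derive g x (dg x)) ->
  sign_changes_at_most D dg k -> sign_changes_at_most D g (S k).
Proof.
  intros Hc Hd H [t [Ht1 Ht2]].
  destruct (mvt_seq g dg t (S k)) as [c [Hc1 Hc2]].
  - intros i x Hi Hx. apply Hd. apply (Hc (t i) (t (S i))); auto; apply Ht1; lia.
  - intros i Hi. apply Ht2; auto.
  - intros i Hi. left. apply Ht2; auto.
  - intros i Hi. intro E. destruct (Ht2 i ltac:(lia)) as [_ h]. rewrite E in h. lra.
  - apply H. exists c. split.
    + intros i Hi. destruct (Hc1 i Hi). apply (Hc (t i) (t (S i))); try lra; apply Ht1; lia.
    + intros i Hi. split.
      * destruct (Hc1 i ltac:(lia)). destruct (Hc1 (S i) ltac:(lia)). lra.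
      * apply Hc2. lia.
Qed.

Lemma sc_deriv0R D g dg k p :
  g p = 0 -> (forall x, D x -> p < x) ->
  (forall x z, D x -> p < z <= x -> D z) ->
  (forall x, D x \/ x = p -> is_derive g x (dg x)) ->
  sign_changes_at_most D dg k -> sign_changes_at_most D g k.
Proof.
  intros Hg0 Hpx Hc Hd H [t [Ht1 Ht2]].
  set (T := fun i => match i with O => p | S j => t j end).
  destruct (mvt_seq g dg T (S k)) as [c [Hc1 Hc2]].
  - intros i x Hi Hx. apply Hd. destruct i as [|i]; simpl in Hx.
    + destruct (Req_dec x p) as [e|ne]; [right; auto|left].
      apply (Hc (t 0%nat)); [apply Ht1; lia|lra].
    + left. apply (Hc (t (S i))). apply Ht1; lia.
      split; [|lra]. pose proof (Hpx (t i) (Ht1 i ltac:(lia))). lra.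
  - intros i Hi. destruct i as [|i]; simpl. apply Hpx, Ht1; lia. apply Ht2; lia.
  - intros i Hi. destruct i as [|i]; simpl. rewrite Hg0; lra. left; apply Ht2; lia.
  - intros i Hi. destruct i as [|i]; [lia|]. simpl. intro E.
    destruct (Ht2 i ltac:(lia)) as [_ h]. rewrite E in h. lra.
  - apply H. exists c. split.
    + intros i Hi. destruct (Hc1 i Hi) as [h1 h2]. apply (Hc (t i)). apply Ht1; lia.
      split; [|simpl in h2; lra]. destruct i as [|i]; simpl in h1. lra.
      pose proof (Hpx (t i) (Ht1 i ltac:(lia))). lra.
    + intros i Hi. split.
      * destruct (Hc1 i ltac:(lia)). destruct (Hc1 (S i) ltac:(lia)). lra.
      * apply Hc2. lia.
Qed.

Lemma sc_deriv0L D g dg k p :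
  g p = 0 -> (forall x, D x -> x < p) ->
  (forall x z, D x -> x <= z < p -> D z) ->
  (forall x, D x \/ x = p -> is_derive g x (dg x)) ->
  sign_changes_at_most D dg k -> sign_changes_at_most D g k.
Proof.
  intros Hg0 Hpx Hc Hd H [t [Ht1 Ht2]].
  set (T := fun i => if Nat.leb i (S k) then t i else p).
  assert (HT : forall i, (i <= S k)%nat -> T i = t i).
  { intros i Hi. unfold T. rewrite (proj2 (Nat.leb_le _ _) Hi). auto. }
  assert (HT' : T (S (S k)) = p).
  { unfold T. replace (Nat.leb (S (S k)) (S k)) with false; auto.
    symmetry. apply Nat.leb_gt. lia. }
  destruct (mvt_seq g dg T (S k)) as [c [Hc1 Hc2]].
  - intros i x Hi Hx. apply Hd. rewrite HT in Hx by lia.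
    destruct (Nat.eq_dec i (S k)) as [e|ne].
    + subst i. rewrite HT' in Hx. destruct (Req_dec x p) as [e|ne]; [right; auto|left].
      apply (Hc (t (S k))); [apply Ht1; lia|lra].
    + left. rewrite HT in Hx by lia. apply (Hc (t i)). apply Ht1; lia.
      split; [lra|]. pose proof (Hpx (t (S i)) (Ht1 (S i) ltac:(lia))). lra.
  - intros i Hi. rewrite HT by lia. destruct (Nat.eq_dec i (S k)) as [e|ne].
    + subst i. rewrite HT'. apply Hpx, Ht1; lia.
    + rewrite HT by lia. apply Ht2; lia.
  - intros i Hi. rewrite HT by lia. destruct (Nat.eq_dec i (S k)) as [e|ne].
    + subst i. rewrite HT', Hg0; lra.
    + rewrite HT by lia. left; apply Ht2; lia.
  - intros i Hi. rewrite HT by lia. intro E. destruct i as [|j]; [lia|].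
    destruct (Ht2 j ltac:(lia)) as [_ h]. rewrite E in h. lra.
  - apply H. exists c. split.
    + intros i Hi. destruct (Hc1 i Hi) as [h1 h2]. rewrite HT in h1 by lia.
      apply (Hc (t i)). apply Ht1; lia. split; [lra|].
      destruct (Nat.eq_dec i (S k)) as [e|ne].
      * subst i. rewrite HT' in h2. lra.
      * rewrite HT in h2 by lia. pose proof (Hpx (t (S i)) (Ht1 (S i) ltac:(lia))). lra.
    + intros i Hi. split.
      * destruct (Hc1 i ltac:(lia)). destruct (Hc1 (S i) ltac:(lia)). lra.
      * apply Hc2. lia.
Qed.


Lemma pos_from_deriv F dF b : F 0 = 0 ->
  (forall x, 0 <= x < b -> is_derive F x (dF x)) ->
  (forall x, 0 < x < b -> 0 < dF x) ->
  forall x, 0 < x < b -> 0 < F x.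
Proof.
  intros H0 Hd Hp x Hx.
  destruct (MVT_cor2 F dF 0 x ltac:(lra)) as [c [Hc1 Hc2]].
  - intros y Hy. apply is_derive_Reals. apply Hd. lra.
  - rewrite H0 in Hc1. assert (0 < dF c * (x - 0)) by (apply Rmult_lt_0_compat; [apply Hp|]; lra). lra.
Qed.

Lemma Sth_pos x : 0 < x < PI -> 0 < sin x - x * cos x.
Proof.
  intros Hx.
  apply (pos_from_deriv (fun x => sin x - x * cos x) (fun x => x * sin x) PI); auto.
  - rewrite sin_0, cos_0. ring.
  - intros y Hy. auto_derive; auto. ring.
  - intros y Hy. apply Rmult_lt_0_compat. lra. apply sin_gt_0; lra.
Qed.

Lemma N4_pos x : 0 < x < PI -> 0 < x * (5 + 3 * (cos x * cos x)) - 8 * sin x * cos x.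
Proof.
  intros Hx.
  apply (pos_from_deriv (fun x => x * (5 + 3 * (cos x * cos x)) - 8 * sin x * cos x)
     (fun x => sin x * (6 * (sin x - x * cos x) + 7 * sin x)) PI); auto.
  - rewrite sin_0, cos_0. ring.
  - intros y Hy. auto_derive; auto. pose proof (sin2_cos2 y). unfold Rsqr in H. nsatz.
  - intros y Hy. pose proof (Sth_pos y Hy). pose proof (sin_gt_0 y ltac:(lra) ltac:(lra)).
    apply Rmult_lt_0_compat; lra.
Qed.

Lemma N3_pos x : 0 < x < PI -> 0 < 3 * sin x * (1 + (cos x * cos x)) - x * cos x * (5 + (cos x * cos x)).
Proof.
  intros Hx.
  apply (pos_from_deriv (fun x => 3 * sin x * (1 + (cos x * cos x)) - x * cos x * (5 + (cos x * cos x)))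
     (fun x => sin x * (x * (5 + 3 * (cos x * cos x)) - 8 * sin x * cos x)) PI); auto.
  - rewrite sin_0, cos_0. ring.
  - intros y Hy. auto_derive; auto. pose proof (sin2_cos2 y). unfold Rsqr in H. nsatz.
  - intros y Hy. pose proof (N4_pos y Hy). pose proof (sin_gt_0 y ltac:(lra) ltac:(lra)).
    apply Rmult_lt_0_compat; lra.
Qed.

Lemma nn_pos x : 0 < x < PI -> 0 < x * (1 + cos x * cos x) - 2 * sin x * cos x.
Proof.
  intros Hx.
  apply (pos_from_deriv (fun x => x * (1 + cos x * cos x) - 2 * sin x * cos x)
     (fun x => sin x * (2 * (sin x - x * cos x) + sin x)) PI); auto.
  - rewrite sin_0, cos_0. ring.
  - intros y Hy. auto_derive; auto. pose proof (sin2_cos2 y). unfold Rsqr in H. nsatz.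
  - intros y Hy. pose proof (Sth_pos y Hy). pose proof (sin_gt_0 y ltac:(lra) ltac:(lra)).
    apply Rmult_lt_0_compat; lra.
Qed.

Definition Sth t := sin t - t * cos t.
Definition nn t := t * (1 + cos t * cos t) - 2 * sin t * cos t.
Definition N3 t := 3 * sin t * (1 + cos t * cos t) - t * cos t * (5 + cos t * cos t).
Definition P2 t := sin t * sin t - 4 * t * sin t * cos t + t * t * (1 + 2 * cos t * cos t).
Definition NN t := t * sin t * Sth t.
Definition NN' t := sin t * sin t - t * t * cos t * cos t + t * t * sin t * sin t.
Definition P2' t := - 2 * sin t * cos t + 4 * t * sin t * sin t + 2 * t - 4 * t * t * sin t * cos t.
Definition KK t := t - NN t / P2 t.
Definition JJ t := P2 t * P2 t - NN' t * P2 t + NN t * P2' t.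
Definition zz t := t * sin t / Sth t.

Lemma odd_facts t : 0 < Rabs t < PI -> 0 < t * Sth t /\ 0 < t * nn t /\ 0 < t * N3 t.
Proof.
  intros Ht. unfold Sth, nn, N3. destruct (Rcase_abs t) as [h|h].
  - rewrite Rabs_left in Ht by auto.
    pose proof (Sth_pos (-t) Ht). pose proof (nn_pos (-t) Ht). pose proof (N3_pos (-t) Ht).
    rewrite sin_neg, cos_neg in *.
    split; [|split]; nra.
  - rewrite Rabs_right in Ht by auto.
    pose proof (Sth_pos t Ht). pose proof (nn_pos t Ht). pose proof (N3_pos t Ht).
    split; [|split]; apply Rmult_lt_0_compat; lra.
Qed.

Lemma P2_eq t : P2 t = Sth t * Sth t + t * nn t.
Proof. unfold P2, Sth, nn. ring. Qed.

Lemma P2_pos t : 0 < Rabs t < PI -> 0 < P2 t.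
Proof.
  intros Ht. destruct (odd_facts t Ht) as [h1 [h2 h3]]. rewrite P2_eq. nra.
Qed.

Lemma Sth_nz t : 0 < Rabs t < PI -> Sth t <> 0.
Proof. intros Ht E. destruct (odd_facts t Ht) as [h1 _]. rewrite E in h1. lra. Qed.

Lemma JJ_eq t : JJ t = t * Sth t * (3 * Sth t * nn t + t * N3 t).
Proof.
  unfold JJ, P2, NN, NN', P2', Sth, nn, N3. pose proof (sin2_cos2 t). unfold Rsqr in H. nsatz.
Qed.

Lemma JJ_pos t : 0 < Rabs t < PI -> 0 < JJ t.
Proof.
  intros Ht. destruct (odd_facts t Ht) as [h1 [h2 h3]]. rewrite JJ_eq.
  assert (t <> 0) by (intro e; subst; rewrite Rabs_R0 in Ht; lra).
  assert (0 < t * t) by nra.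
  assert (0 < Sth t * nn t).
  { assert (0 < (t * Sth t) * (t * nn t)) by nra.
    replace ((t * Sth t) * (t * nn t)) with ((t * t) * (Sth t * nn t)) in H1 by ring.
    destruct (Rlt_le_dec 0 (Sth t * nn t)); auto. nra. }
  apply Rmult_lt_0_compat; lra.
Qed.

Lemma KK_deriv t : 0 < Rabs t < PI -> is_derive KK t (JJ t / (P2 t * P2 t)).
Proof.
  intros Ht. pose proof (P2_pos t Ht). unfold KK, JJ, NN, NN', P2', Sth.
  unfold P2 in *. auto_derive.
  - lra.
  - field. lra.
Qed.

Lemma incr_on F dF p q : p <= q ->
  (forall x, p <= x <= q -> is_derive F x (dF x)) ->
  (forall x, p <= x <= q -> 0 <= dF x) -> F p <= F q.
Proof.
  intros Hpq Hd Hp. destruct (Req_dec p q) as [e|ne]. subst; lra.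
  destruct (MVT_cor2 F dF p q ltac:(lra)) as [c [Hc1 Hc2]].
  - intros y Hy. apply is_derive_Reals. apply Hd. lra.
  - assert (0 <= dF c * (q - p)) by (apply Rmult_le_pos; [apply Hp|]; lra). lra.
Qed.

Lemma KK_mono t1 t2 : t1 <= t2 -> ((0 < t1 /\ t2 < PI) \/ (-PI < t1 /\ t2 < 0)) -> KK t1 <= KK t2.
Proof.
  intros H12 Hs. apply (incr_on KK (fun t => JJ t / (P2 t * P2 t))); auto.
  - intros x Hx. apply KK_deriv. destruct Hs as [[h1 h2]|[h1 h2]].
    rewrite Rabs_right; lra. rewrite Rabs_left; lra.
  - intros x Hx. assert (Hx' : 0 < Rabs x < PI).
    { destruct Hs as [[h1 h2]|[h1 h2]]. rewrite Rabs_right; lra. rewrite Rabs_left; lra. }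
    pose proof (JJ_pos x Hx'). pose proof (P2_pos x Hx').
    apply Rlt_le, Rdiv_lt_0_compat; nra.
Qed.

Lemma zz_deriv t : Sth t <> 0 -> is_derive zz t ((sin t * sin t - t * t) / (Sth t * Sth t)).
Proof.
  intros Ht. replace (sin t * sin t - t * t) with (sin t * sin t - t * t * cos t * cos t - t * t * sin t * sin t).
  unfold zz. unfold Sth in *. auto_derive. auto. field. auto.
  pose proof (sin2_cos2 t). unfold Rsqr in H. nsatz.
Qed.


Lemma is_derive_Phi m x0 a : is_derive (Phi m x0) a (IZR m * (fst x0 * sin a - snd x0 * cos a)).
Proof. unfold Phi. auto_derive; auto. ring. Qed.

Lemma DPhi m x0 a : Derive (Phi m x0) a = IZR m * (fst x0 * sin a - snd x0 * cos a).
Proof. apply is_derive_unique, is_derive_Phi. Qed.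

Lemma DDPhi m x0 a : Derive (Derive (Phi m x0)) a = IZR m * (fst x0 * cos a + snd x0 * sin a).
Proof.
  rewrite (Derive_ext _ (fun a => IZR m * (fst x0 * sin a - snd x0 * cos a))) by apply DPhi.
  apply is_derive_unique. auto_derive; auto. ring.
Qed.

Lemma DPhil k m l x0 a : k <> 0 ->
  Derive (Phil k m l x0) a = IZR m * (fst x0 * sin a - snd x0 * cos a) - IZR l / k.
Proof.
  intros Hk. apply is_derive_unique. unfold Phil, Phi. auto_derive; auto. field. auto.
Qed.


Section Alpha.
Variables k mr lr x1 x2 a0 : R.
Definition W a := k * mr * (x1 * sin a - x2 * cos a) - lr.
Definition Q a := k * mr * (x1 * cos a + x2 * sin a).
Definition V a := - k * mr * (x1 * cos a + x2 * sin a) - lr * a - (- k * mr * (x1 * cos a0 + x2 * sin a0) - lr * a0).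
Definition th a := 2 * PI * W a.
Definition G1 a := Q a * Q a + (W a + lr) * zz (th a) / (2 * PI).
Definition M a := W a * sin (PI * W a) / (PI * Q a * cos (PI * W a)) - 2 * V a.

Lemma W_der a : is_derive W a (Q a).
Proof. unfold W, Q. auto_derive; auto. ring. Qed.
Lemma Q_der a : is_derive Q a (- (W a + lr)).
Proof. unfold W, Q. auto_derive; auto. ring. Qed.
Lemma V_der a : is_derive V a (W a).
Proof. unfold W, V. auto_derive; auto. ring. Qed.

Definition dG1 a := - Q a * (P2 (th a) / (Sth (th a) * Sth (th a))) * (lr + KK (th a) / (2 * PI)).
Lemma th_der a : is_derive th a (2 * PI * Q a).
Proof. unfold th, W, Q. auto_derive; auto. ring. Qed.

Lemma G1_der a : Sth (th a) <> 0 -> P2 (th a) <> 0 -> is_derive G1 a (dG1 a).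
Proof.
  intros H1 H2. pose proof PI_RGT_0. unfold G1. auto_derive.
  - repeat split.
    + exists (- (W a + lr)); apply Q_der.
    + exists (- (W a + lr)); apply Q_der.
    + exists (Q a); apply W_der.
    + eexists; apply zz_deriv; auto.
    + eexists; apply th_der.
  - replace (Derive (fun x => Q x) a) with (- (W a + lr)) by (symmetry; apply is_derive_unique, Q_der).
    replace (Derive (fun x => W x) a) with (Q a) by (symmetry; apply is_derive_unique, W_der).
    replace (Derive (fun x => th x) a) with (2 * PI * Q a) by (symmetry; apply is_derive_unique, th_der).
    replace (Derive (fun x => zz x) (th a)) with ((sin (th a) * sin (th a) - th a * th a) / (Sth (th a) * Sth (th a))) by (symmetry; apply is_derive_unique, zz_deriv; auto).
    unfold dG1, KK, NN, zz. unfold th in *. unfold P2 in *. unfold Sth in *.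
    field. lra.
Qed.

Definition dM a := (Q a * Q a * (2 * sin (PI * W a) * cos (PI * W a) - 2 * PI * W a * (cos (PI * W a) * cos (PI * W a) - sin (PI * W a) * sin (PI * W a)))
   + (W a + lr) * W a * (2 * sin (PI * W a) * cos (PI * W a))) / (2 * PI * Q a * Q a * cos (PI * W a) * cos (PI * W a)).

Lemma M_der a : Q a <> 0 -> cos (PI * W a) <> 0 -> is_derive M a (dM a).
Proof.
  intros H1 H2. pose proof PI_RGT_0. unfold M. auto_derive.
  - assert (ew : ex_derive (fun x => W x) a) by (exists (Q a); apply W_der).
    assert (eq' : ex_derive (fun x => Q x) a) by (exists (- (W a + lr)); apply Q_der).
    assert (ev : ex_derive (fun x => V x) a) by (exists (W a); apply V_der).
    repeat split; auto.
    apply Rmult_integral_contrapositive; split; auto. apply Rmult_integral_contrapositive; split; auto. lra.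
  - replace (Derive (fun x => Q x) a) with (- (W a + lr)) by (symmetry; apply is_derive_unique, Q_der).
    replace (Derive (fun x => W x) a) with (Q a) by (symmetry; apply is_derive_unique, W_der).
    replace (Derive (fun x => V x) a) with (W a) by (symmetry; apply is_derive_unique, V_der).
    unfold dM. field. split; auto. split; auto. lra.
Qed.

Lemma dM_factor a : Q a <> 0 -> cos (PI * W a) <> 0 -> Sth (th a) <> 0 ->
  dM a = Sth (th a) / (2 * PI * Q a * Q a * cos (PI * W a) * cos (PI * W a)) * G1 a.
Proof.
  intros H1 H2 H3. pose proof PI_RGT_0.
  assert (E1 : sin (th a) = 2 * sin (PI * W a) * cos (PI * W a)).
  { unfold th. replace (2 * PI * W a) with (2 * (PI * W a)) by ring. apply sin_2a. }
  assert (E2 : Sth (th a) = 2 * sin (PI * W a) * cos (PI * W a) - 2 * PI * W a * (cos (PI * W a) * cos (PI * W a) - sin (PI * W a) * sin (PI * W a))).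
  { unfold Sth. rewrite E1. unfold th. replace (2 * PI * W a) with (2 * (PI * W a)) by ring.
    rewrite cos_2a. ring. }
  unfold dM, G1, zz. rewrite E1. rewrite E2 in *. unfold th. field.
  repeat split; auto. lra.
Qed.

Definition hh a := W a * sin (PI * W a) - 2 * PI * V a * Q a * cos (PI * W a).

Lemma hh_factor a : Q a <> 0 -> cos (PI * W a) <> 0 -> hh a = (PI * Q a * cos (PI * W a)) * M a.
Proof. intros. pose proof PI_RGT_0. unfold hh, M. field. repeat split; auto. lra. Qed.

Lemma M_a0 : W a0 = 0 -> M a0 = 0.
Proof. intros H. unfold M. rewrite H. unfold V. unfold Rdiv. ring. Qed.

Lemma cos_pos_W a : Rabs (W a) < 1/2 -> 0 < cos (PI * W a).
Proof.
  intros H. pose proof PI_RGT_0. apply Rabs_def2 in H. apply cos_gt_0; nra.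
Qed.

Lemma sc_G1 (D : R -> Prop) (s : R) :
  (s = 1 \/ s = -1) ->
  (forall x y z, D x -> D y -> x <= z <= y -> D z) ->
  (forall x, D x -> 0 < s * Q x) ->
  (forall x, D x -> 0 < Rabs (th x) < PI) ->
  ((forall x, D x -> 0 < th x) \/ (forall x, D x -> th x < 0)) ->
  sign_changes_at_most D G1 2.
Proof.
  intros Hs Hc HQ Hth Hside. pose proof PI_RGT_0.
  assert (Hmono : forall x y, D x -> D y -> x <= y -> 0 <= s * (th y - th x)).
  { intros x y Dx Dy Hxy.
    assert (s * th x <= s * th y).
    { apply (incr_on (fun z => s * th z) (fun z => s * (2 * PI * Q z)) x y Hxy).
      - intros z Hz. apply (is_derive_scal (fun z => th z) z s). apply th_der.
      - intros z Hz. pose proof (HQ z (Hc x y z Dx Dy Hz)). nra. }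
    lra. }
  assert (HK : forall x y, D x -> D y -> x <= y -> 0 <= s * (KK (th y) - KK (th x))).
  { intros x y Dx Dy Hxy. pose proof (Hmono x y Dx Dy Hxy) as Hm.
    pose proof (Hth x Dx) as [_ Rx]. pose proof (Hth y Dy) as [_ Ry].
    apply Rabs_def2 in Rx. apply Rabs_def2 in Ry.
    destruct Hs as [e|e]; subst s.
    - assert (th x <= th y) by lra.
      assert (KK (th x) <= KK (th y)). { apply KK_mono; auto.
        destruct Hside as [h|h]; [left|right]; pose proof (h x Dx); pose proof (h y Dy).
        split; lra. split; lra. }
      lra.
    - assert (th y <= th x) by lra.
      assert (KK (th y) <= KK (th x)). { apply KK_mono; auto.
        destruct Hside as [h|h]; [left|right]; pose proof (h x Dx); pose proof (h y Dy).
        split; lra. split; lra. }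
      lra. }
  assert (S1 : sign_changes_at_most D (fun x => s * (lr + KK (th x) / (2 * PI))) 1).
  { apply sc_monotone. intros x y Dx Dy Hxy. pose proof (HK x y Dx Dy Hxy).
    assert (0 <= s * (KK (th y) - KK (th x)) / (2 * PI)) by (apply Rmult_le_pos; [lra|]; apply Rlt_le, Rinv_0_lt_compat; lra).
    unfold Rdiv in *. nra. }
  assert (S2 : sign_changes_at_most D (fun x => lr + KK (th x) / (2 * PI)) 1).
  { apply (sc_factor D _ (fun _ => s) (fun x => s * (lr + KK (th x) / (2 * PI))) 1 ); auto.
    - intros x Dx. destruct Hs as [e|e]; rewrite e; ring.
    - intros. destruct Hs as [e|e]; rewrite e; lra. }
  assert (S3 : sign_changes_at_most D dG1 1).
  { apply (sc_factor D _ (fun x => - Q x * (P2 (th x) / (Sth (th x) * Sth (th x)))) (fun x => lr + KK (th x) / (2 * PI)) 1); auto.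
    - intros x y Dx Dy. pose proof (HQ x Dx). pose proof (HQ y Dy).
      pose proof (P2_pos _ (Hth x Dx)). pose proof (P2_pos _ (Hth y Dy)).
      pose proof (Sth_nz _ (Hth x Dx)). pose proof (Sth_nz _ (Hth y Dy)).
      assert (0 < Q x * Q y) by (destruct Hs as [e|e]; rewrite e in *; nra).
      assert (0 < P2 (th x) / (Sth (th x) * Sth (th x))).
      { apply Rdiv_lt_0_compat; auto. assert (Sth (th x) * Sth (th x) > 0) by (apply Rsqr_pos_lt; auto). lra. }
      assert (0 < P2 (th y) / (Sth (th y) * Sth (th y))).
      { apply Rdiv_lt_0_compat; auto. assert (Sth (th y) * Sth (th y) > 0) by (apply Rsqr_pos_lt; auto). lra. }
      set (u := P2 (th x) / (Sth (th x) * Sth (th x))) in *.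
      set (v := P2 (th y) / (Sth (th y) * Sth (th y))) in *.
      replace (- Q x * u * (- Q y * v)) with ((Q x * Q y) * (u * v)) by ring.
      apply Rmult_lt_0_compat; auto. apply Rmult_lt_0_compat; auto. }
  apply (sc_deriv D G1 dG1 1); auto.
  intros x Dx. apply G1_der. apply Sth_nz; auto. apply Rgt_not_eq, P2_pos; auto.
Qed.

Lemma sc_right (c : R) (s : R) :
  (s = 1 \/ s = -1) -> W a0 = 0 ->
  (forall x, a0 < x < c -> 0 < s * Q x) -> 0 < s * Q a0 ->
  (forall x, a0 < x < c -> 0 < s * W x /\ Rabs (W x) < 1/2) ->
  sign_changes_at_most (fun x => a0 < x < c) hh 2.
Proof.
  intros Hs HW0 HQ HQ0 HW. pose proof PI_RGT_0.
  set (D := fun x => a0 < x < c).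
  assert (Hc : forall x y z, D x -> D y -> x <= z <= y -> D z) by (unfold D; intros; lra).
  assert (HQD : forall x, D x -> 0 < s * Q x) by (unfold D; intros; apply HQ; auto).
  assert (Hth : forall x, D x -> 0 < Rabs (th x) < PI).
  { intros x Dx. destruct (HW x Dx) as [h1 h2]. unfold th.
    rewrite Rabs_mult, (Rabs_right (2 * PI)) by lra.
    assert (0 < Rabs (W x)). { apply Rabs_pos_lt. intro e. rewrite e in h1. lra. }
    split; nra. }
  assert (Hsd : (forall x, D x -> 0 < th x) \/ (forall x, D x -> th x < 0)).
  { destruct Hs as [e|e]; [left|right]; intros x Dx; destruct (HW x Dx) as [h1 h2]; rewrite e in h1; unfold th; nra. }
  assert (Hsth : forall x y, D x -> D y -> 0 < Sth (th x) * Sth (th y)).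
  { intros x y Dx Dy. destruct (odd_facts _ (Hth x Dx)) as [hx _]. destruct (odd_facts _ (Hth y Dy)) as [hy _].
    assert (0 < th x * th y) by (destruct Hsd as [h|h]; pose proof (h x Dx); pose proof (h y Dy); nra).
    assert (HH : 0 < (th x * Sth (th x)) * (th y * Sth (th y))) by nra.
    replace ((th x * Sth (th x)) * (th y * Sth (th y))) with ((th x * th y) * (Sth (th x) * Sth (th y))) in HH by ring.
    destruct (Rlt_le_dec 0 (Sth (th x) * Sth (th y))); auto. nra. }
  assert (Hcos : forall x, D x -> 0 < cos (PI * W x)) by (intros x Dx; apply cos_pos_W, HW, Dx).
  assert (HQ2 : forall x y, D x -> D y -> 0 < Q x * Q y).
  { intros x y Dx Dy. pose proof (HQD x Dx). pose proof (HQD y Dy). destruct Hs as [e|e]; rewrite e in *; nra. }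
  pose proof (sc_G1 D s Hs Hc HQD Hth Hsd) as S1.
  assert (S2 : sign_changes_at_most D dM 2).
  { apply (sc_factor D _ (fun x => Sth (th x) / (2 * PI * Q x * Q x * cos (PI * W x) * cos (PI * W x))) G1 2); auto.
    - intros x Dx. apply dM_factor. pose proof (HQD x Dx); intro e; rewrite e in *; lra.
      pose proof (Hcos x Dx); lra. apply Sth_nz; auto.
    - intros x y Dx Dy. unfold Rdiv.
      pose proof (Hsth x y Dx Dy). pose proof (HQ2 x x Dx Dx). pose proof (HQ2 y y Dy Dy).
      pose proof (Hcos x Dx). pose proof (Hcos y Dy).
      assert (0 < / (2 * PI * Q x * Q x * cos (PI * W x) * cos (PI * W x))).
      { apply Rinv_0_lt_compat. assert (0 < cos (PI * W x) * cos (PI * W x)) by nra.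
        replace (2 * PI * Q x * Q x * cos (PI * W x) * cos (PI * W x)) with ((2 * PI) * (Q x * Q x) * (cos (PI * W x) * cos (PI * W x))) by ring.
        apply Rmult_lt_0_compat; [apply Rmult_lt_0_compat|]; lra. }
      assert (0 < / (2 * PI * Q y * Q y * cos (PI * W y) * cos (PI * W y))).
      { apply Rinv_0_lt_compat. assert (0 < cos (PI * W y) * cos (PI * W y)) by nra.
        replace (2 * PI * Q y * Q y * cos (PI * W y) * cos (PI * W y)) with ((2 * PI) * (Q y * Q y) * (cos (PI * W y) * cos (PI * W y))) by ring.
        apply Rmult_lt_0_compat; [apply Rmult_lt_0_compat|]; lra. }
      set (u := / (2 * PI * Q x * Q x * cos (PI * W x) * cos (PI * W x))) in *.
      set (v := / (2 * PI * Q y * Q y * cos (PI * W y) * cos (PI * W y))) in *.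
      replace (Sth (th x) * u * (Sth (th y) * v)) with ((Sth (th x) * Sth (th y)) * (u * v)) by ring.
      apply Rmult_lt_0_compat; auto. apply Rmult_lt_0_compat; auto. }
  assert (S3 : sign_changes_at_most D M 2).
  { apply (sc_deriv0R D M dM 2 a0); auto.
    - apply M_a0; auto.
    - unfold D; intros; lra.
    - unfold D; intros; lra.
    - intros x Hx. apply M_der.
      + assert (0 < s * Q x). { destruct Hx as [Hx|Hx]. apply HQ; auto. rewrite Hx; auto. }
        intro e; rewrite e in *; lra.
      + assert (0 < cos (PI * W x)); [|lra].
        destruct Hx as [Hx|Hx]. apply Hcos; auto. subst x. rewrite HW0. rewrite Rmult_0_r, cos_0. lra. }
  apply (sc_factor D _ (fun x => PI * Q x * cos (PI * W x)) M 2); auto.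
  - intros x Dx. apply hh_factor. pose proof (HQD x Dx); intro e; rewrite e in *; lra.
    pose proof (Hcos x Dx); lra.
  - intros x y Dx Dy. pose proof (HQ2 x y Dx Dy). pose proof (Hcos x Dx). pose proof (Hcos y Dy).
    replace (PI * Q x * cos (PI * W x) * (PI * Q y * cos (PI * W y))) with ((PI * PI) * (Q x * Q y) * (cos (PI * W x) * cos (PI * W y))) by ring.
    apply Rmult_lt_0_compat; [apply Rmult_lt_0_compat; [nra|lra] | apply Rmult_lt_0_compat; lra].
Qed.

Lemma sc_left (c : R) (s : R) :
  (s = 1 \/ s = -1) -> W a0 = 0 ->
  (forall x, c < x < a0 -> 0 < s * Q x) -> 0 < s * Q a0 ->
  (forall x, c < x < a0 -> 0 < (- s) * W x /\ Rabs (W x) < 1/2) ->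
  sign_changes_at_most (fun x => c < x < a0) hh 2.
Proof.
  intros Hs HW0 HQ HQ0 HW. pose proof PI_RGT_0.
  set (D := fun x => c < x < a0).
  assert (Hc : forall x y z, D x -> D y -> x <= z <= y -> D z) by (unfold D; intros; lra).
  assert (HQD : forall x, D x -> 0 < s * Q x) by (unfold D; intros; apply HQ; auto).
  assert (Hth : forall x, D x -> 0 < Rabs (th x) < PI).
  { intros x Dx. destruct (HW x Dx) as [h1 h2]. unfold th.
    rewrite Rabs_mult, (Rabs_right (2 * PI)) by lra.
    assert (0 < Rabs (W x)). { apply Rabs_pos_lt. intro e. rewrite e in h1. lra. }
    split; nra. }
  assert (Hsd : (forall x, D x -> 0 < th x) \/ (forall x, D x -> th x < 0)).
  { destruct Hs as [e|e]; [right|left]; intros x Dx; destruct (HW x Dx) as [h1 h2]; rewrite e in h1; unfold th; nra. }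
  assert (Hsth : forall x y, D x -> D y -> 0 < Sth (th x) * Sth (th y)).
  { intros x y Dx Dy. destruct (odd_facts _ (Hth x Dx)) as [hx _]. destruct (odd_facts _ (Hth y Dy)) as [hy _].
    assert (0 < th x * th y) by (destruct Hsd as [h|h]; pose proof (h x Dx); pose proof (h y Dy); nra).
    assert (HH : 0 < (th x * Sth (th x)) * (th y * Sth (th y))) by nra.
    replace ((th x * Sth (th x)) * (th y * Sth (th y))) with ((th x * th y) * (Sth (th x) * Sth (th y))) in HH by ring.
    destruct (Rlt_le_dec 0 (Sth (th x) * Sth (th y))); auto. nra. }
  assert (Hcos : forall x, D x -> 0 < cos (PI * W x)) by (intros x Dx; apply cos_pos_W, HW, Dx).
  assert (HQ2 : forall x y, D x -> D y -> 0 < Q x * Q y).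
  { intros x y Dx Dy. pose proof (HQD x Dx). pose proof (HQD y Dy). destruct Hs as [e|e]; rewrite e in *; nra. }
  pose proof (sc_G1 D s Hs Hc HQD Hth Hsd) as S1.
  assert (S2 : sign_changes_at_most D dM 2).
  { apply (sc_factor D _ (fun x => Sth (th x) / (2 * PI * Q x * Q x * cos (PI * W x) * cos (PI * W x))) G1 2); auto.
    - intros x Dx. apply dM_factor. pose proof (HQD x Dx); intro e; rewrite e in *; lra.
      pose proof (Hcos x Dx); lra. apply Sth_nz; auto.
    - intros x y Dx Dy. unfold Rdiv.
      pose proof (Hsth x y Dx Dy). pose proof (HQ2 x x Dx Dx). pose proof (HQ2 y y Dy Dy).
      pose proof (Hcos x Dx). pose proof (Hcos y Dy).
      assert (0 < / (2 * PI * Q x * Q x * cos (PI * W x) * cos (PI * W x))).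
      { apply Rinv_0_lt_compat. assert (0 < cos (PI * W x) * cos (PI * W x)) by nra.
        replace (2 * PI * Q x * Q x * cos (PI * W x) * cos (PI * W x)) with ((2 * PI) * (Q x * Q x) * (cos (PI * W x) * cos (PI * W x))) by ring.
        apply Rmult_lt_0_compat; [apply Rmult_lt_0_compat|]; lra. }
      assert (0 < / (2 * PI * Q y * Q y * cos (PI * W y) * cos (PI * W y))).
      { apply Rinv_0_lt_compat. assert (0 < cos (PI * W y) * cos (PI * W y)) by nra.
        replace (2 * PI * Q y * Q y * cos (PI * W y) * cos (PI * W y)) with ((2 * PI) * (Q y * Q y) * (cos (PI * W y) * cos (PI * W y))) by ring.
        apply Rmult_lt_0_compat; [apply Rmult_lt_0_compat|]; lra. }
      set (u := / (2 * PI * Q x * Q x * cos (PI * W x) * cos (PI * W x))) in *.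
      set (v := / (2 * PI * Q y * Q y * cos (PI * W y) * cos (PI * W y))) in *.
      replace (Sth (th x) * u * (Sth (th y) * v)) with ((Sth (th x) * Sth (th y)) * (u * v)) by ring.
      apply Rmult_lt_0_compat; auto. apply Rmult_lt_0_compat; auto. }
  assert (S3 : sign_changes_at_most D M 2).
  { apply (sc_deriv0L D M dM 2 a0); auto.
    - apply M_a0; auto.
    - unfold D; intros; lra.
    - unfold D; intros; lra.
    - intros x Hx. apply M_der.
      + assert (0 < s * Q x). { destruct Hx as [Hx|Hx]. apply HQ; auto. rewrite Hx; auto. }
        intro e; rewrite e in *; lra.
      + assert (0 < cos (PI * W x)); [|lra].
        destruct Hx as [Hx|Hx]. apply Hcos; auto. subst x. rewrite HW0. rewrite Rmult_0_r, cos_0. lra. }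
  apply (sc_factor D _ (fun x => PI * Q x * cos (PI * W x)) M 2); auto.
  - intros x Dx. apply hh_factor. pose proof (HQD x Dx); intro e; rewrite e in *; lra.
    pose proof (Hcos x Dx); lra.
  - intros x y Dx Dy. pose proof (HQ2 x y Dx Dy). pose proof (Hcos x Dx). pose proof (Hcos y Dy).
    replace (PI * Q x * cos (PI * W x) * (PI * Q y * cos (PI * W y))) with ((PI * PI) * (Q x * Q y) * (cos (PI * W x) * cos (PI * W y))) by ring.
    apply Rmult_lt_0_compat; [apply Rmult_lt_0_compat; [nra|lra] | apply Rmult_lt_0_compat; lra].
Qed.

Definition cf a := sign (V a / k) / (2 * k * sqrt (Rabs (V a / k)) * (sin (PI * W a) * sin (PI * W a))).

Lemma f_rel a : 0 < k -> V a <> 0 -> sin (PI * W a) <> 0 ->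
  is_derive (fun b => sqrt (Rabs (V b / k)) / sin (PI * W b)) a (cf a * hh a).
Proof.
  intros Hk HV Hs. pose proof PI_RGT_0.
  assert (Hy : V a / k <> 0) by (unfold Rdiv; apply Rmult_integral_contrapositive; split; auto; apply Rinv_neq_0_compat; lra).
  assert (Hay : 0 < Rabs (V a / k)) by (apply Rabs_pos_lt; auto).
  auto_derive.
  - repeat split; auto.
    + exists (W a); apply V_der.
    + exists (Q a); apply W_der.
  - replace (Derive (fun x => W x) a) with (Q a) by (symmetry; apply is_derive_unique, W_der).
    replace (Derive (fun x => V x) a) with (W a) by (symmetry; apply is_derive_unique, V_der).
    unfold cf, hh.
    assert (Hr : 0 < sqrt (Rabs (V a / k))) by (apply sqrt_lt_R0; auto).
    assert (Hrr : sqrt (Rabs (V a / k)) * sqrt (Rabs (V a / k)) = Rabs (V a / k)) by (apply sqrt_sqrt; lra).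
    repeat change (V a * / k) with (V a / k).
    set (r := sqrt (Rabs (V a / k))) in *.
    destruct (Rlt_dec 0 (V a / k)) as [hp|hn].
    + rewrite (sign_eq_1 _ hp). rewrite (Rabs_right _ (Rgt_ge _ _ hp)) in Hrr.
      assert (EV : V a = k * (r * r)) by (rewrite Hrr; field; lra).
      rewrite EV. field. repeat split; lra.
    + assert (hn' : V a / k < 0) by lra. rewrite (sign_eq_m1 _ hn'). rewrite (Rabs_left _ hn') in Hrr.
      assert (EV : V a = - k * (r * r)) by (rewrite Hrr; field; lra).
      rewrite EV. field. repeat split; lra.
Qed.
End Alpha.


Lemma strict_incr F dF x y : x < y -> (forall z, x <= z <= y -> is_derive F z (dF z)) ->
  (forall z, x < z < y -> 0 < dF z) -> F x < F y.
Proof.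
  intros Hxy Hd Hp. destruct (MVT_cor2 F dF x y Hxy) as [c [Hc1 Hc2]].
  - intros; apply is_derive_Reals; auto.
  - assert (0 < dF c * (y - x)) by (apply Rmult_lt_0_compat; [apply Hp|]; lra). lra.
Qed.

Lemma cont_of_deriv f x l : is_derive f x l -> continuity_pt f x.
Proof. intros H. apply derivable_continuous_pt. exists l. apply is_derive_Reals; auto. Qed.

Lemma sin_nz_W w : Rabs w < 1/2 -> w <> 0 -> sin (PI * w) <> 0.
Proof.
  intros H1 H2. pose proof PI_RGT_0. apply Rabs_def2 in H1.
  destruct (Rlt_dec 0 w).
  - assert (0 < sin (PI * w)) by (apply sin_gt_0; nra). lra.
  - assert (w < 0) by lra. assert (HH : 0 < sin (- (PI * w))) by (apply sin_gt_0; nra).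
    rewrite sin_neg in HH. lra.
Qed.

Theorem mainTheorem11 :
  forall (kappa : R) (x0 : R * R),
    0 < kappa ->
    irrational (kappa * norm2 x0) ->
    exists N : nat,
      forall (m l : Z) (a b alpha0 : R),
        m <> 0%Z ->
        -PI <= a -> a <= b -> b <= PI ->
        (* (1) *)
        (forall alpha, a < alpha < b -> Derive (Derive (Phi m x0)) alpha <> 0) ->
        (* (2) *)
        a <= alpha0 <= b ->
        kappa * Derive (Phi m x0) alpha0 = IZR l ->
        Derive (Derive (Phi m x0)) alpha0 <> 0 ->
        (* (3) *)
        (forall alpha, a <= alpha <= b ->
           Rabs (kappa * Derive (Phi m x0) alpha - IZR l) <= 1 / 2) ->
        sign_changes_at_most
          (fun alpha => a <= alpha <= b /\ Derive (Phil kappa m l x0) alpha <> 0)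
          (f_fun kappa m l x0 alpha0) N.
Proof.
  intros kappa x0 Hk _. exists 7%nat.
  intros m l a b a0 Hm Ha Hab Hb H1 Ha0 H2 H2' H3.
  pose proof PI_RGT_0 as HPI.
  set (Wf := W kappa (IZR m) (IZR l) (fst x0) (snd x0)).
  set (Qf := Q kappa (IZR m) (fst x0) (snd x0)).
  set (Vf := V kappa (IZR m) (IZR l) (fst x0) (snd x0) a0).
  assert (EQ : forall t, Derive (Derive (Phi m x0)) t = Qf t / kappa).
  { intros t. rewrite DDPhi. unfold Qf, Q. field. lra. }
  assert (EW : forall t, kappa * Derive (Phi m x0) t - IZR l = Wf t).
  { intros t. rewrite DPhi. unfold Wf, W. ring. }
  assert (EPhil : forall t, Derive (Phil kappa m l x0) t = Wf t / kappa).
  { intros t. rewrite DPhil by lra. unfold Wf, W. field. lra. }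
  assert (Eu : forall t, u_fun kappa m l x0 a0 t = Vf t / kappa).
  { intros t. unfold u_fun, Phil, Phi, Vf, V. field. lra. }
  assert (HQ : forall t, a < t < b -> Qf t <> 0).
  { intros t Ht E. apply (H1 t Ht). rewrite EQ, E. unfold Rdiv; ring. }
  assert (HQ0 : Qf a0 <> 0).
  { intros E. apply H2'. rewrite EQ, E. unfold Rdiv; ring. }
  assert (HW0 : Wf a0 = 0) by (rewrite <- EW, H2; ring).
  assert (HW3 : forall t, a <= t <= b -> Rabs (Wf t) <= 1/2) by (intros t Ht; rewrite <- EW; auto).
  assert (HV0 : Vf a0 = 0) by (unfold Vf, V; ring).
  assert (HWd : forall t, is_derive Wf t (Qf t)) by (intros; apply W_der).
  assert (HVd : forall t, is_derive Vf t (Wf t)) by (intros; apply V_der).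
  assert (HQd : forall t, is_derive Qf t (- (Wf t + IZR l))) by (intros; apply Q_der).
  assert (Hsx : exists s, (s = 1 \/ s = -1) /\ 0 < s * Qf a0).
  { destruct (Rlt_dec 0 (Qf a0)). exists 1; split; auto; lra. exists (-1); split; auto.
    assert (Qf a0 < 0) by (destruct (Rtotal_order (Qf a0) 0) as [h|[h|h]]; auto; lra). lra. }
  destruct Hsx as [s [Hs HsQ0]].
  assert (Hss : s * s = 1) by (destruct Hs; subst; ring).
  assert (HsQ : forall t, a < t < b -> 0 < s * Qf t).
  { intros t Ht. destruct (Rlt_dec 0 (s * Qf t)) as [h|h]; auto. exfalso.
    assert (hn : s * Qf t < 0).
    { destruct (Rtotal_order (s * Qf t) 0) as [h'|[h'|h']]; auto; try lra.
      exfalso. apply (HQ t Ht). replace (Qf t) with (s * (s * Qf t)) by (rewrite <- Rmult_assoc, Hss; ring).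
      rewrite h'; ring. }
    assert (Hc : continuity (fun z => s * Qf z)).
    { intros z. apply (cont_of_deriv _ _ (s * (- (Wf z + IZR l)))). apply (is_derive_scal (fun z => Qf z) z s). auto. }
    destruct (IVT_gen (fun z => s * Qf z) t a0 0 Hc) as [z [Hz1 Hz2]].
    { unfold Rmin, Rmax. destruct (Rle_dec (s * Qf t) (s * Qf a0)); lra. }
    assert (z <> t) by (intro e; subst z; lra).
    assert (z <> a0) by (intro e; subst z; lra).
    assert (Hzab : a < z < b).
    { revert Hz1. unfold Rmin, Rmax. destruct (Rle_dec t a0); intros; lra. }
    apply (HQ z Hzab). replace (Qf z) with (s * (s * Qf z)) by (rewrite <- Rmult_assoc, Hss; ring).
    rewrite Hz2; ring. }
  assert (HWmono : forall x y, a <= x -> x < y -> y <= b -> s * Wf x < s * Wf y).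
  { intros x y h1 h2 h3. apply (strict_incr (fun z => s * Wf z) (fun z => s * Qf z)); auto.
    intros z Hz. apply (is_derive_scal (fun z => Wf z) z s). auto.
    intros z Hz. apply HsQ. lra. }
  assert (HabsW : forall t, Rabs (Wf t) = Rabs (s * Wf t)) by (intros t; rewrite Rabs_mult; destruct Hs; subst; rewrite ?Rabs_R1, ?Rabs_m1; ring).
  assert (HR : forall x, a0 < x < b -> 0 < s * Wf x /\ Rabs (Wf x) < 1/2).
  { intros x Hx. pose proof (HWmono a0 x ltac:(lra) ltac:(lra) ltac:(lra)) as h1. rewrite HW0, Rmult_0_r in h1.
    pose proof (HWmono x b ltac:(lra) ltac:(lra) ltac:(lra)) as h2.
    pose proof (HW3 b ltac:(lra)) as h3. rewrite HabsW in h3. pose proof (Rle_abs (s * Wf b)).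
    split; auto. rewrite HabsW. apply Rabs_def1; lra. }
  assert (HL : forall x, a < x < a0 -> 0 < - s * Wf x /\ Rabs (Wf x) < 1/2).
  { intros x Hx. pose proof (HWmono x a0 ltac:(lra) ltac:(lra) ltac:(lra)) as h1. rewrite HW0, Rmult_0_r in h1.
    pose proof (HWmono a x ltac:(lra) ltac:(lra) ltac:(lra)) as h2.
    pose proof (HW3 a ltac:(lra)) as h3. rewrite HabsW in h3. pose proof (Rle_abs (- (s * Wf a))). rewrite Rabs_Ropp in H.
    split. lra. rewrite HabsW. apply Rabs_def1; lra. }
  pose proof (sc_right kappa (IZR m) (IZR l) (fst x0) (snd x0) a0 b s Hs HW0
    (fun x Hx => HsQ x ltac:(lra)) HsQ0 HR) as SR.
  pose proof (sc_left kappa (IZR m) (IZR l) (fst x0) (snd x0) a0 a s Hs HW0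
    (fun x Hx => HsQ x ltac:(lra)) HsQ0 HL) as SL.
  assert (HVR : forall x, a0 < x < b -> 0 < s * Vf x).
  { intros x Hx. replace 0 with (s * Vf a0) by (rewrite HV0; ring).
    apply (strict_incr (fun z => s * Vf z) (fun z => s * Wf z)); try lra.
    intros z Hz. apply (is_derive_scal (fun z => Vf z) z s). auto.
    intros z Hz. apply HR. lra. }
  assert (HVL : forall x, a < x < a0 -> 0 < s * Vf x).
  { intros x Hx. cut (- (s * Vf x) < - (s * Vf a0)). rewrite HV0; lra.
    apply (strict_incr (fun z => - (s * Vf z)) (fun z => - (s * Wf z))); try lra.
    intros z Hz. apply (is_derive_opp (fun z => s * Vf z)). apply (is_derive_scal (fun z => Vf z) z s). auto.
    intros z Hz. pose proof (HL z ltac:(lra)). lra. }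
  set (side := fun x => a0 < x < b \/ a < x < a0).
  assert (Hside : forall x, side x -> 0 < s * Vf x /\ Rabs (Wf x) < 1/2 /\ Wf x <> 0).
  { intros x [Hx|Hx].
    - destruct (HR x Hx). split; auto. split; auto. intro e; rewrite e in *; lra.
    - destruct (HL x Hx). split; auto. split; auto. intro e; rewrite e in *; lra. }
  assert (Hf : forall x, side x -> f_fun kappa m l x0 a0 x = cf kappa (IZR m) (IZR l) (fst x0) (snd x0) a0 x * hh kappa (IZR m) (IZR l) (fst x0) (snd x0) a0 x).
  { intros x Hx. destruct (Hside x Hx) as [h1 [h2 h3]]. unfold f_fun.
    rewrite (Derive_ext _ (fun b => sqrt (Rabs (Vf b / kappa)) / sin (PI * Wf b))).
    - apply is_derive_unique. apply f_rel; auto.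
      intro e. unfold Vf in h1. rewrite e in h1. lra. apply sin_nz_W; auto.
    - intros t. rewrite Eu, EPhil. f_equal. f_equal. field. lra. }
  assert (Hcf : forall x, side x -> cf kappa (IZR m) (IZR l) (fst x0) (snd x0) a0 x =
      s / (2 * kappa * sqrt (Rabs (Vf x / kappa)) * (sin (PI * Wf x) * sin (PI * Wf x))) /\
      0 < 2 * kappa * sqrt (Rabs (Vf x / kappa)) * (sin (PI * Wf x) * sin (PI * Wf x))).
  { intros x Hx. destruct (Hside x Hx) as [h1 [h2 h3]].
    assert (hv : Vf x / kappa <> 0).
    { unfold Rdiv. apply Rmult_integral_contrapositive; split. intro e; rewrite e in h1; lra.
      apply Rinv_neq_0_compat; lra. }
    split.
    - unfold cf. fold Vf Wf. f_equal. destruct Hs as [e|e]; rewrite e in *.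
      + apply sign_eq_1. apply Rdiv_lt_0_compat; lra.
      + apply sign_eq_m1. unfold Rdiv. assert (0 < / kappa) by (apply Rinv_0_lt_compat; lra). nra.
    - assert (0 < sqrt (Rabs (Vf x / kappa))) by (apply sqrt_lt_R0, Rabs_pos_lt; auto).
      pose proof (sin_nz_W _ h2 h3).
      assert (0 < sin (PI * Wf x) * sin (PI * Wf x)) by (apply Rsqr_pos_lt; auto).
      apply Rmult_lt_0_compat; auto. apply Rmult_lt_0_compat; auto. lra. }
  assert (Hcfpos : forall x y, side x -> side y -> 0 < cf kappa (IZR m) (IZR l) (fst x0) (snd x0) a0 x * cf kappa (IZR m) (IZR l) (fst x0) (snd x0) a0 y).
  { intros x y Hx Hy. destruct (Hcf x Hx) as [e1 p1]. destruct (Hcf y Hy) as [e2 p2].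
    rewrite e1, e2. unfold Rdiv.
    replace (s * / (2 * kappa * sqrt (Rabs (Vf x * / kappa)) * (sin (PI * Wf x) * sin (PI * Wf x))) *
      (s * / (2 * kappa * sqrt (Rabs (Vf y * / kappa)) * (sin (PI * Wf y) * sin (PI * Wf y)))))
     with ((s * s) * (/ (2 * kappa * sqrt (Rabs (Vf x * / kappa)) * (sin (PI * Wf x) * sin (PI * Wf x))) *
      / (2 * kappa * sqrt (Rabs (Vf y * / kappa)) * (sin (PI * Wf y) * sin (PI * Wf y))))) by ring.
    rewrite Hss, Rmult_1_l. apply Rmult_lt_0_compat; apply Rinv_0_lt_compat; auto. }
  assert (SR' : sign_changes_at_most (fun x => a0 < x < b) (f_fun kappa m l x0 a0) 2).
  { apply (sc_factor _ _ (cf kappa (IZR m) (IZR l) (fst x0) (snd x0) a0) (hh kappa (IZR m) (IZR l) (fst x0) (snd x0) a0)); auto.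
    - intros x Hx. apply Hf. left; auto.
    - intros x y Hx Hy. apply Hcfpos; left; auto. }
  assert (SL' : sign_changes_at_most (fun x => a < x < a0) (f_fun kappa m l x0 a0) 2).
  { apply (sc_factor _ _ (cf kappa (IZR m) (IZR l) (fst x0) (snd x0) a0) (hh kappa (IZR m) (IZR l) (fst x0) (snd x0) a0)); auto.
    - intros x Hx. apply Hf. right; auto.
    - intros x y Hx Hy. apply Hcfpos; right; auto. }
  destruct (Req_dec a b) as [eab|nab].
  - apply (sc_mono_N _ _ 0). lia. apply (sc_sub (fun x => x = a)). intros x [Hx _]. lra. apply sc_point.
  - assert (U1 := sc_union (fun x => x = a) (fun x => a < x < a0) (f_fun kappa m l x0 a0) 0 2 ltac:(intros x y hx hy; cbv beta in *; lra) (sc_point a _) SL').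
    assert (U2 := fun H => sc_union _ _ (f_fun kappa m l x0 a0) _ 2 H U1 SR').
    specialize (U2 ltac:(intros x y hx hy; cbv beta in *; repeat match goal with h : _ \/ _ |- _ => destruct h end; lra)).
    assert (U3 := fun H => sc_union _ _ (f_fun kappa m l x0 a0) _ 0 H U2 (sc_point b _)).
    specialize (U3 ltac:(intros x y hx hy; cbv beta in *; repeat match goal with h : _ \/ _ |- _ => destruct h end; lra)).
    eapply sc_sub; [|exact U3]. intros x Hx. cbv beta. destruct Hx as [[h1 h2] h3]. rewrite EPhil in h3.
    destruct (Req_dec x a); [left; left; left; auto|]. destruct (Req_dec x b); [right; auto|].
    destruct (Rtotal_order x a0) as [h|[h|h]].
    + left; left; right; lra.
    + exfalso. apply h3. rewrite h, HW0. unfold Rdiv; ring.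
    + left; right; lra.
Qed.
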